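(* Let $\mathcal{L}\subseteq\{w\in\{t,t^{-1}\}^*:\sharp_t(w)-\sharp_{t^{-1}}(w)\ge0\}$ be a regular language. Then there is a constant $K\ge0$ such that for all $w\in\mathcal{L}$ and all $i,j\in\{0,1,\dots,\ell(w)\}$ with $j>i$, one has $f_w(j)>f_w(i)-K$.
   Context: For a word $w$ and a letter $x$, $\sharp_x(w)$ is the number of occurrences of $x$ in $w$, and $\ell(w)$ is the length of $w$. For $w=x_1\cdots x_n\in\{t,t^{-1}\}^*$ with $x_i\in\{t,t^{-1}\}$, define $f_w\colon\{0,1,\dots,n\}\to\mathbb{Z}$ by $f_w(i)=\sharp_t(x_1\cdots x_i)-\sharp_{t^{-1}}(x_1\cdots x_i)$. A regular language is one accepted by a finite state automaton. *)

(* Defs.v *)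
From HB Require Import structures.
From mathcomp Require Import all_boot all_order all_algebra.
Set Implicit Arguments. Unset Strict Implicit. Unset Printing Implicit Defensive.
Import Order.TTheory GRing.Theory Num.Theory.

Inductive letter := tt_ | tinv.
Definition letter_eqb (a b : letter) : bool :=
  match a, b with tt_, tt_ | tinv, tinv => true | _, _ => false end.
Lemma letter_eqP : Equality.axiom letter_eqb.
Proof. by case; case; constructor. Qed.
HB.instance Definition _ := hasDecEq.Build letter letter_eqP.

Definition word := seq letter.

Definition nocc (x : letter) (w : word) : nat := count_mem x w.

Definition fw (w : word) (i : nat) : int :=
  (nocc tt_ (take i w))%:Z - (nocc tinv (take i w))%:Z.

Record dfa := DFA {
  dfa_state : finType;
  dfa_start : dfa_state;
  dfa_delta : dfa_state -> letter -> dfa_state;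
  dfa_final : pred dfa_state }.

Definition dfa_accepts (A : dfa) (w : word) : bool :=
  @dfa_final A (foldl (@dfa_delta A) (@dfa_start A) w).

Definition regular (L : word -> Prop) : Prop :=
  exists A : dfa, forall w, L w <-> dfa_accepts A w.

(* Main.v *)
Require Import Defs.
From mathcomp Require Import all_boot all_order all_algebra.
From mathcomp Require Import zify.
Import Order.TTheory GRing.Theory Num.Theory.
Local Open Scope ring_scope.

Definition D (v : word) : int := (nocc tt_ v)%:Z - (nocc tinv v)%:Z.

Lemma D_cat u v : D (u ++ v) = D u + D v.
Proof. rewrite /D /nocc !count_cat !PoszD; lia. Qed.

Lemma D_nil : D [::] = 0.
Proof. by []. Qed.

Lemma D_rcons v c : D (rcons v c) = D v + (if c is tt_ then 1 else -1).
Proof. rewrite -cats1 D_cat; case: c => //. Qed.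

Lemma D_flatten m y : D (flatten (nseq m y)) = m%:Z * D y.
Proof.
elim: m => [|m IH] /=; first by rewrite mul0r.
by rewrite D_cat IH -addn1 PoszD mulrDl mul1r addrC.
Qed.

Lemma pos_ex (v : word) (m : nat) : D v <= - m%:Z ->
  exists p : nat -> nat,
    [/\ (forall k, k <= m -> p k <= size v)%N,
        (forall a b, a <= b -> b <= m -> p a <= p b)%N &
        (forall k, (k <= m)%N -> D (take (p k) v) = - k%:Z)].
Proof.
elim/last_ind: v m => [|v c IH] m.
  rewrite D_nil => hm.
  have m0 : m = 0%N by lia.
  subst m; exists (fun _ => 0%N); split => // k hk.
  by have -> : k = 0%N by lia.
move=> hD.
case: (boolP (D v <= - m%:Z)) => hv.
  have [p [h1 h2 h3]] := IH m hv.
  exists p; split => //.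
  - by move=> k hk; apply: leq_trans (h1 k hk) _; rewrite size_rcons.
  - by move=> k hk; rewrite -cats1 takel_cat ?h1 // h3.
have hc : c = tinv /\ D v = - m%:Z + 1.
  move: hD hv; rewrite -ltNge D_rcons; case: c => /= h1 h2; [exfalso; lia | split => //; lia].
case: hc => -> hDv.
case: m hD hv hDv => [|m'] hD hv hDv.
  exists (fun _ => 0%N); split => // k hk.
  by rewrite take0 D_nil; lia.
have [p [h1 h2 h3]] := IH m' ltac:(lia).
exists (fun k => if k == m'.+1 then size (rcons v tinv) else p k); split.
- move=> k hk; case: eqP => // hne.
  apply: leq_trans (h1 k ltac:(lia)) _; by rewrite size_rcons.
- move=> a b hab hb; case: eqP => ha; case: eqP => hb'.
  + by [].
  + lia.
  + by apply: leq_trans (h1 a ltac:(lia)) _; rewrite size_rcons.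
  + by apply: h2; lia.
- move=> k hk; case: eqP => hk'.
  + by rewrite take_size hk' D_rcons hDv /=; lia.
  + by rewrite -cats1 takel_cat ?h1 ?h3 //; lia.
Qed.

Lemma pump (A : dfa) q y m : foldl (@dfa_delta A) q y = q ->
  foldl (@dfa_delta A) q (flatten (nseq m y)) = q.
Proof. move=> hy; elim: m => [|m IH] //=; by rewrite foldl_cat hy. Qed.

Theorem lemma4p4 (L : word -> Prop) (hreg : regular L)
    (hsub : forall w, L w -> (nocc tt_ w)%:Z - (nocc tinv w)%:Z >= 0) :
  exists K : int, 0 <= K /\
    forall w, L w -> forall i j : nat,
      (i <= size w)%N -> (j <= size w)%N -> (i < j)%N ->
      fw w j > fw w i - K.
Proof.
have [A hA] := hreg.
set N := #|dfa_state A|.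
exists N%:Z; split => // w Lw i j hi hj hij.
rewrite ltNge; apply/negP => hle.
set u := take i w; set v := drop i (take j w); set z := drop j w.
have hw : w = u ++ v ++ z.
  by rewrite /u /v /z catA -{1}(take_takel w (ltnW hij)) !cat_take_drop.
have hDv : D v <= - N%:Z.
  have e1 : fw w i = D u by [].
  have e2 : fw w j = D (u ++ v).
    by rewrite /u /v -{1}(take_takel w (ltnW hij)) cat_take_drop.
  move: hle; rewrite e1 e2 D_cat; lia.
have [p [h1 h2 h3]] := pos_ex _ _ hDv.
set s0 := foldl (@dfa_delta A) (dfa_start A) u.
pose g (k : 'I_N.+1) := foldl (@dfa_delta A) s0 (take (p k) v).
have : ~~ injectiveb g.
  apply/negP => /injectiveP/leq_card; rewrite card_ord /N; lia.
move=> /injectivePn [a0 [b0 hab hg]].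
have [a [b [hab' hgab]]] : exists a b : 'I_N.+1, (a < b)%N /\ g a = g b.
  case: (ltngtP a0 b0) => h.
  - by exists a0, b0.
  - by exists b0, a0.
  - by move: hab; rewrite (val_inj h) eqxx.
have hpa : (p a <= p b)%N by apply: h2; [lia | rewrite -ltnS].
have hpb : (p b <= size v)%N by apply: h1; rewrite -ltnS.
set x := u ++ take (p a) v.
set y := drop (p a) (take (p b) v).
set z' := drop (p b) v ++ z.
have hw2 : w = x ++ y ++ z'.
  rewrite hw /x /y /z' !catA; congr (_ ++ _); rewrite -!catA; congr (_ ++ _).
  by rewrite catA -{1}(take_takel v hpa) !cat_take_drop.
have hDy : D y = a%:Z - b%:Z.
  have : D (take (p b) v) = D (take (p a) v) + D y.
    by rewrite -D_cat /y -{1}(take_takel v hpa) cat_take_drop.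
  rewrite !h3; [lia | by rewrite -ltnS | by rewrite -ltnS].
have hq : foldl (@dfa_delta A) (foldl (@dfa_delta A) (dfa_start A) x) y
          = foldl (@dfa_delta A) (dfa_start A) x.
  have ey : take (p a) v ++ y = take (p b) v.
    by rewrite /y -{1}(take_takel v hpa) cat_take_drop.
  rewrite /x -foldl_cat -catA ey !foldl_cat.
  exact: (esym hgab).
clearbody x y z'.
set m := (absz (D x + D z')).+1.
have hm : m = (absz (D x + D z')).+1 by [].
clearbody m.
have Lm : L (x ++ flatten (nseq m y) ++ z').
  have acc : dfa_accepts A w := (hA w).1 Lw.
  apply/hA; move: acc; rewrite hw2 /dfa_accepts !foldl_cat.
  by rewrite hq (@pump A _ _ m hq).
have := hsub _ Lm; rewrite -/(D _) !D_cat D_flatten hDy.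
have hab2 : (a < b)%N := hab'.
have : (m%:Z * (a%:Z - b%:Z) <= - m%:Z).
  have hneg : a%:Z - b%:Z <= -1 by lia.
  by rewrite -(mulrN1 m%:Z) ler_wpM2l.
rewrite hm; lia.
Qed.
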